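(* Every generalized conical $\mathcal{G}$-coding $(g_0,\mathbf e)$ codes exactly one point of $\partial(\Gamma,\mathcal{P})$, and this point is a conical limit point.
   Context: Setup. $\Gamma$ is a finitely generated group hyperbolic relative to a finite nonempty collection $\mathcal{P}$ of infinite subgroups, with $(\Gamma,\mathcal{P})$ non-elementary, and $\mathcal{S}$ a finite symmetric generating set with $P\cap\mathcal{S}$ generating $P$ for each $P\in\mathcal{P}$. $X$ is the Groves–Manning cusped space (the Cayley graph with combinatorial horoballs glued along the cosets $gP$), a locally finite graph with unit edges, metric $d_X$, $\delta$-hyperbolic for a fixed integer $\delta\ge1$; $|g|_X=d_X(\mathrm{id},g)$. Its Gromov boundary is the Bowditch boundary $\partial(\Gamma,\mathcal{P})$, with a fixed metric $d_\partial$ (balls $B_r$, neighborhoods $N_r$, closed neighborhoods $\overline N_r$, $\operatorname{diam}$ w.r.t. $d_\partial$). $\Pi$ is the finite set of points fixed by groups in $\mathcal{P}$, $\Gamma_p$ the group fixing $p\in\Pi$; translates $gp$ are parabolic points, and all other boundary points are conical limit points. $D>0$ is such that any distinct $x,y$ have some $g\in\Gamma$ with $d_\partial(gx,gy)>D$; for $p\in\Pi$, $K_p\subset\partial(\Gamma,\mathcal{P})\setminus\{p\}$ is compact with $\Gamma_pK_p=\partial(\Gamma,\mathcal{P})\setminus\{p\}$, and $D_\Pi>0$ satisfies $D_\Pi<\operatorname{diam}K_p$, $D_\Pi<d_\partial(K_p,p)$ for all $p$. Automaton. Fix $0<\varepsilon<\min(D/5,D_\Pi/5)$, a finite set $Z\subset\partial(\Gamma,\mathcal{P})$,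 and for each $z\in Z$ open sets $V(z),W(z),\hat V(z),\hat W(z)$ and a set $L(z)\subset\Gamma$ such that: if $z$ is conical, $L(z)=\{\alpha_z\}$, $\hat V(z)=\alpha_z^{-1}V(z)$, $\hat W(z)=\alpha_z^{-1}W(z)$; if $z=gp$ is parabolic ($p\in\Pi$), then $L(z)=g\Gamma_p\setminus F_z$ for a finite set $F_z$, $\hat V(z)\subset\hat W(z)\subset\partial(\Gamma,\mathcal{P})\setminus\{p\}$ and $p\notin\overline N_\varepsilon(\hat W(z))$; the sets $V(z)$, $z\in Z$, cover $\partial(\Gamma,\mathcal{P})$; and for all $z\in Z$: (C1) $\operatorname{diam}W(z)<\varepsilon$; (C2) $\operatorname{diam}\hat W(z)>4\varepsilon$; (C3) $\overline N_{2\varepsilon}(\hat V(z))\subset\hat W(z)$; (C4) $W(z)=\{z\}\cup\bigcup_{\alpha\in L(z)}\alpha\hat W(z)$; (C5) $V(z)=\{z\}\cup\bigcup_{\alpha\in L(z)}\alpha\hat V(z)$ and $\overline{V(z)}\subset W(z)$; (C6) for all $y,z\in Z$, $\overline{\hat V(z)}\cap\overline{V(y)}=\emptyset$ iff $\hat V(z)\cap V(y)=\emptyset$. The automaton $\mathcal{G}$ is the directed graph with vertex set $Z$ where, for $y,z\in Z$, there is no edge from $z$ to $y$ if $\hat V(z)\cap V(y)=\emptyset$, and otherwise there is exactly one edge from $z$ to $y$ labeled $\alpha$ for each $\alpha\in L(z)$. For an edge $e$, $\iota(e),\tau(e),\mathrm{Lab}(e)$ denote its initial vertex, terminal vertex and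 label. Codings. A strict conical coding is an infinite edge path $\mathbf e=(e_k)_{k\ge1}$ in $\mathcal{G}$; writing $\alpha_k=\mathrm{Lab}(e_k)$, $z_k=\tau(e_k)$ ($k\ge1$), $z_0=\iota(e_1)$, it is a strict coding of $\zeta$ if $\zeta\in\bigcap_{k\ge0}\alpha_1\cdots\alpha_k\overline{W(z_k)}$. A generalized conical coding is a pair $(g_0,\mathbf e)$ with $g_0\in\Gamma$ and $\mathbf e$ a strict conical coding; if $\mathbf e$ codes $\xi$, then $(g_0,\mathbf e)$ codes $g_0\xi$. *)

(* Defs.v *)
From Stdlib Require Import Reals List Classical.
Open Scope R_scope.

Definition is_group {G : Type} (mul : G -> G -> G) (inv : G -> G) (e : G) : Prop :=
  (forall a b c, mul a (mul b c) = mul (mul a b) c) /\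
  (forall a, mul e a = a) /\ (forall a, mul a e = a) /\
  (forall a, mul (inv a) a = e) /\ (forall a, mul a (inv a) = e).

Definition word_prod {G : Type} (mul : G -> G -> G) (e : G) (l : list G) : G :=
  fold_right mul e l.

Definition finite_set {T : Type} (H : T -> Prop) : Prop :=
  exists l : list T, forall x, H x -> In x l.

Definition is_metric {B : Type} (d : B -> B -> R) : Prop :=
  (forall x y, 0 <= d x y) /\ (forall x y, d x y = 0 <-> x = y) /\
  (forall x y, d x y = d y x) /\ (forall x y z, d x z <= d x y + d y z).

Definition seq_converges {B : Type} (d : B -> B -> R) (u : nat -> B) (x : B) : Prop :=
  forall eps, 0 < eps -> exists N, forall n, (N <= n)%nat -> d (u n) x < eps.

Definition strictly_incr (phi : nat -> nat) : Prop := forall n, (phi n < phi (S n))%nat.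

(** (sequential) compactness, equivalent to compactness in a metric space *)
Definition m_compact_set {B : Type} (d : B -> B -> R) (K : B -> Prop) : Prop :=
  forall u : nat -> B, (forall n, K (u n)) ->
    exists phi, strictly_incr phi /\ exists x, K x /\ seq_converges d (fun n => u (phi n)) x.

Definition m_open_set {B : Type} (d : B -> B -> R) (A : B -> Prop) : Prop :=
  forall x, A x -> exists r, 0 < r /\ forall y, d x y < r -> A y.

Definition m_closure {B : Type} (d : B -> B -> R) (A : B -> Prop) : B -> Prop :=
  fun x => forall s, 0 < s -> exists a, A a /\ d x a < s.

(** closed [r]-neighbourhood  {x | d(x,A) <= r} *)
Definition closed_nbhd {B : Type} (d : B -> B -> R) (r : R) (A : B -> Prop) : B -> Prop :=
  fun x => forall s, r < s -> exists a, A a /\ d x a < s.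

Definition diam_lt {B : Type} (d : B -> B -> R) (A : B -> Prop) (c : R) : Prop :=
  exists r, r < c /\ forall x y, A x -> A y -> d x y <= r.

Definition diam_gt {B : Type} (d : B -> B -> R) (A : B -> Prop) (c : R) : Prop :=
  exists x y, A x /\ A y /\ c < d x y.

Definition setdist_gt {B : Type} (d : B -> B -> R) (A : B -> Prop) (p : B) (c : R) : Prop :=
  exists r, c < r /\ forall a, A a -> r <= d a p.

Definition is_action {G B : Type} (mul : G -> G -> G) (e : G) (act : G -> B -> B) : Prop :=
  (forall x, act e x = x) /\ (forall g h x, act (mul g h) x = act g (act h x)).

Definition continuous_map {B : Type} (d : B -> B -> R) (f : B -> B) : Prop :=
  forall x eps, 0 < eps -> exists del, 0 < del /\ forall y, d x y < del -> d (f x) (f y) < eps.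

Definition loc_unif_conv {G B : Type} (d : B -> B -> R) (act : G -> B -> B)
    (g : nat -> G) (a b : B) : Prop :=
  forall K, m_compact_set d K -> (forall x, K x -> x <> a) ->
    forall eps, 0 < eps -> exists N, forall n, (N <= n)%nat ->
      forall x, K x -> d (act (g n) x) b < eps.

Definition convergence_action {G B : Type} (d : B -> B -> R) (act : G -> B -> B) : Prop :=
  forall g : nat -> G, (forall m n, g m = g n -> m = n) ->
    exists phi, strictly_incr phi /\ exists a b,
      loc_unif_conv d act (fun n => g (phi n)) a b.

Definition conical_limit_point {G B : Type} (d : B -> B -> R) (act : G -> B -> B) (x : B) : Prop :=
  exists (g : nat -> G) (a b : B), a <> b /\
    seq_converges d (fun n => act (g n) x) a /\ loc_unif_conv d act g x b.

Definition stabilizer {G B : Type} (act : G -> B -> B) (p : B) : G -> Prop :=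
  fun h => act h p = p.

Fixpoint gpow {G : Type} (mul : G -> G -> G) (e : G) (g : G) (n : nat) : G :=
  match n with O => e | S n => mul g (gpow mul e g n) end.

Definition loxodromic {G B : Type} (mul : G -> G -> G) (e : G) (act : G -> B -> B) (g : G) : Prop :=
  (forall n, (1 <= n)%nat -> gpow mul e g n <> e) /\
  exists a b, a <> b /\ act g a = a /\ act g b = b /\
    forall x, act g x = x -> x = a \/ x = b.

Definition parabolic_point {G B : Type} (mul : G -> G -> G) (e : G) (act : G -> B -> B) (p : B) : Prop :=
  ~ finite_set (stabilizer act p) /\
  forall h, stabilizer act p h -> ~ loxodromic mul e act h.

Definition bounded_parabolic {G B : Type} (d : B -> B -> R) (mul : G -> G -> G) (e : G)
    (act : G -> B -> B) (p : B) : Prop :=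
  parabolic_point mul e act p /\
  exists K, m_compact_set d K /\ (forall x, K x -> x <> p) /\
    forall x, x <> p -> exists h k, stabilizer act p h /\ K k /\ x = act h k.

(** [(G, Ps)] is relatively hyperbolic with Bowditch boundary [(B, d, act)], in
    Bowditch's dynamical formulation: [act] is a geometrically finite convergence
    action by homeomorphisms on the compact metric space [B], and [Ps] is a list of
    representatives of the conjugacy classes of maximal parabolic subgroups, namely
    [nth i Ps] is the stabilizer of [nth i Pi], the points of [Pi] are bounded
    parabolic and lie in pairwise distinct orbits, and every bounded parabolic
    point lies in the orbit of a point of [Pi]. *)
Definition rel_hyp_boundary {G B : Type} (mul : G -> G -> G) (inv : G -> G) (e : G)
    (Ps : list (G -> Prop)) (B0 : B) (d : B -> B -> R) (act : G -> B -> B) (Pi : list B) : Prop :=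
  is_metric d /\ m_compact_set d (fun _ => True) /\
  is_action mul e act /\ (forall g, continuous_map d (act g)) /\
  convergence_action d act /\
  (forall x, conical_limit_point d act x \/ bounded_parabolic d mul e act x) /\
  length Ps = length Pi /\
  (forall i, (i < length Pi)%nat ->
     forall h, nth i Ps (fun _ => False) h <-> stabilizer act (nth i Pi B0) h) /\
  (forall p, In p Pi -> bounded_parabolic d mul e act p) /\
  (forall i j g, (i < length Pi)%nat -> (j < length Pi)%nat ->
     act g (nth i Pi B0) = nth j Pi B0 -> i = j) /\
  (forall x, bounded_parabolic d mul e act x -> exists g p, In p Pi /\ x = act g p).

(** parabolic points in the sense of the paper: translates of points of Pi *)
Definition in_parabolic_orbit {G B : Type} (act : G -> B -> B) (Pi : list B) (x : B) : Prop :=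
  exists g p, In p Pi /\ x = act g p.

Definition is_edge {G B : Type} (Z : list B) (Vh V : B -> B -> Prop) (L : B -> G -> Prop)
    (z : B) (a : G) (y : B) : Prop :=
  In z Z /\ In y Z /\ L z a /\ exists x, Vh z x /\ V y x.

(** an infinite edge path e_1 e_2 ... given by vertices [zs k] = z_k (k >= 0)
    and labels [als k] = alpha_{k+1}: e_{k+1} goes from z_k to z_{k+1} *)
Definition edge_path {G B : Type} (Z : list B) (Vh V : B -> B -> Prop) (L : B -> G -> Prop)
    (zs : nat -> B) (als : nat -> G) : Prop :=
  forall k, is_edge Z Vh V L (zs k) (als k) (zs (S k)).

Fixpoint label_prod {G : Type} (mul : G -> G -> G) (e : G) (als : nat -> G) (k : nat) : G :=
  match k with O => e | S k => mul (label_prod mul e als k) (als k) end.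

Definition strict_codes {G B : Type} (mul : G -> G -> G) (e : G) (d : B -> B -> R)
    (act : G -> B -> B) (W : B -> B -> Prop) (zs : nat -> B) (als : nat -> G) (zeta : B) : Prop :=
  forall k, exists y, m_closure d (W (zs k)) y /\ zeta = act (label_prod mul e als k) y.

Definition gen_codes {G B : Type} (mul : G -> G -> G) (e : G) (d : B -> B -> R)
    (act : G -> B -> B) (W : B -> B -> Prop) (g0 : G) (zs : nat -> B) (als : nat -> G) (x : B) : Prop :=
  exists xi, strict_codes mul e d act W zs als xi /\ x = act g0 xi.

(* Main.v *)
Require Import Defs.
From Stdlib Require Import Reals List Classical Lra Lia ClassicalEpsilon FunctionalExtensionality.
Open Scope R_scope.


Lemma sub_freq (P : nat -> Prop) : (forall N, exists n, (N <= n)%nat /\ P n) ->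
  exists phi, strictly_incr phi /\ forall k, P (phi k).
Proof.
  intro H. destruct (choice (fun N n => (N <= n)%nat /\ P n) H) as [nx Hnx].
  exists (fix f k := match k with O => nx O | S k => nx (S (f k)) end).
  split.
  - intro n. simpl. destruct (Hnx (S ((fix f (k : nat) : nat := match k with
                                         | 0%nat => nx 0%nat
                                         | S k0 => nx (S (f k0))
                                         end) n))). lia.
  - intro k. destruct k; simpl; apply Hnx.
Qed.

Fixpoint phl {T} (f : nat -> T) (Bd : list T -> nat) (k : nat) : list nat :=
  match k with
  | O => 0%nat :: nil
  | S k => let l := phl f Bd k in (Nat.max (S (hd 0%nat l)) (Bd (map f l))) :: l
  end.

Lemma inj_sub {T} (f : nat -> T) : (forall t, exists N, forall n, (N <= n)%nat -> f n <> t) ->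
  exists phi, strictly_incr phi /\ forall m n, f (phi m) = f (phi n) -> m = n.
Proof.
  intro H.
  assert (HB : forall l : list T, exists N, forall n, (N <= n)%nat -> ~ In (f n) l).
  { induction l as [|t l IH]. exists 0%nat. intros n _ Hc. inversion Hc.
    destruct IH as [N1 H1]. destruct (H t) as [N2 H2]. exists (N1 + N2)%nat.
    intros n Hn [Hc|Hc]. apply (H2 n). lia. auto. apply (H1 n). lia. auto. }
  destruct (choice _ HB) as [Bd HBd].
  set (phi := fun k => hd 0%nat (phl f Bd k)).
  assert (Hs : forall k, phi (S k) = Nat.max (S (phi k)) (Bd (map f (phl f Bd k)))).
  { intro k. reflexivity. }
  assert (Hin : forall k m, (m <= k)%nat -> In (phi m) (phl f Bd k)).
  { induction k; intros m Hm.
    - assert (m = 0%nat) by lia. subst. simpl. auto.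
    - destruct (Nat.eq_dec m (S k)). subst. unfold phi. simpl. auto.
      simpl. right. apply IHk. lia. }
  exists phi. split.
  - intro n. rewrite Hs. lia.
  - assert (Hne : forall m n, (m < n)%nat -> f (phi m) <> f (phi n)).
    { intros m n Hmn Heq. destruct n. lia.
      apply (HBd (map f (phl f Bd n)) (phi (S n))). rewrite Hs. lia.
      rewrite <- Heq. apply in_map. apply Hin. lia. }
    intros m n Heq. destruct (Nat.lt_trichotomy m n) as [h|[h|h]]; auto.
    exfalso. apply (Hne m n h Heq). exfalso. apply (Hne n m h). auto.
Qed.

Fixpoint lstf {T} (ch : list T -> T) (k : nat) : list T :=
  match k with O => nil | S k => ch (lstf ch k) :: lstf ch k end.

Lemma inf_seq {T} (P : T -> Prop) : ~ finite_set P ->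
  exists f : nat -> T, (forall n, P (f n)) /\ forall m n, f m = f n -> m = n.
Proof.
  intro H.
  assert (Hl : forall l : list T, exists x, P x /\ ~ In x l).
  { intro l. apply NNPP. intro Hc. apply H. exists l. intros x Px.
    apply NNPP. intro. apply Hc. eauto. }
  destruct (choice _ Hl) as [ch Hch].
  exists (fun k => ch (lstf ch k)). split. intro n. apply Hch.
  assert (Hin : forall n m, (m < n)%nat -> In (ch (lstf ch m)) (lstf ch n)).
  { induction n; intros m Hm. lia. simpl. destruct (Nat.eq_dec m n). subst; auto.
    right. apply IHn. lia. }
  intros m n Heq. destruct (Nat.lt_trichotomy m n) as [h|[h|h]]; auto; exfalso.
  - apply (proj2 (Hch (lstf ch n))). rewrite <- Heq. auto.
  - apply (proj2 (Hch (lstf ch m))). rewrite Heq. auto.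
Qed.

Section Basics.
Variables (G : Type) (mul : G -> G -> G) (inv : G -> G) (e : G).
Hypothesis HG : is_group mul inv e.
Variables (B : Type) (d : B -> B -> R) (act : G -> B -> B).
Hypothesis Hmet : is_metric d.
Hypothesis Hcpt : m_compact_set d (fun _ => True).
Hypothesis Hact : is_action mul e act.
Hypothesis Hcont : forall g, continuous_map d (act g).
Hypothesis Hconv : convergence_action d act.
Hypothesis Hinf : forall l : list B, exists y, ~ In y l.

Lemma g_assoc a b c : mul a (mul b c) = mul (mul a b) c.
Proof. apply HG. Qed.
Lemma g_el a : mul e a = a. Proof. apply HG. Qed.
Lemma g_er a : mul a e = a. Proof. apply HG. Qed.
Lemma g_il a : mul (inv a) a = e. Proof. apply HG. Qed.
Lemma g_ir a : mul a (inv a) = e. Proof. apply HG. Qed.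

Lemma g_cancel_l a b c : mul a b = mul a c -> b = c.
Proof.
  intro H. rewrite <- (g_el b), <- (g_el c), <- (g_il a), <- !g_assoc, H. reflexivity.
Qed.
Lemma g_cancel_r a b c : mul b a = mul c a -> b = c.
Proof.
  intro H. rewrite <- (g_er b), <- (g_er c), <- (g_ir a), !g_assoc, H. reflexivity.
Qed.
Lemma g_inv_inj a b : inv a = inv b -> a = b.
Proof.
  intro H. apply (g_cancel_l (inv a)). rewrite g_il. rewrite H, g_il. reflexivity.
Qed.

Lemma act_e x : act e x = x. Proof. apply Hact. Qed.
Lemma act_mul g h x : act (mul g h) x = act g (act h x). Proof. apply Hact. Qed.
Lemma act_inv_l g x : act (inv g) (act g x) = x.
Proof. rewrite <- act_mul, g_il. apply act_e. Qed.
Lemma act_inv_r g x : act g (act (inv g) x) = x.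
Proof. rewrite <- act_mul, g_ir. apply act_e. Qed.
Lemma act_inj g x y : act g x = act g y -> x = y.
Proof. intro H. rewrite <- (act_inv_l g x), <- (act_inv_l g y), H. reflexivity. Qed.

Lemma d_nonneg x y : 0 <= d x y. Proof. apply Hmet. Qed.
Lemma d_refl x : d x x = 0. Proof. apply Hmet. reflexivity. Qed.
Lemma d_eq x y : d x y = 0 -> x = y. Proof. apply Hmet. Qed.
Lemma d_sym x y : d x y = d y x. Proof. apply Hmet. Qed.
Lemma d_tri x y z : d x z <= d x y + d y z. Proof. apply Hmet. Qed.
Lemma d_pos x y : x <> y -> 0 < d x y.
Proof.
  intro H. destruct (Rle_lt_or_eq_dec 0 (d x y) (d_nonneg x y)) as [h|h]; auto.
  exfalso. apply H, d_eq. auto.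
Qed.

Lemma si_ge phi : strictly_incr phi -> forall n, (n <= phi n)%nat.
Proof.
  intros H n. induction n. lia. specialize (H n). lia.
Qed.
Lemma si_mono phi : strictly_incr phi -> forall m n, (m <= n)%nat -> (phi m <= phi n)%nat.
Proof.
  intros H m n Hmn. induction Hmn. lia. specialize (H m0). lia.
Qed.
Lemma si_comp phi psi : strictly_incr phi -> strictly_incr psi -> strictly_incr (fun n => phi (psi n)).
Proof.
  intros H1 H2 n. unfold strictly_incr in *.
  assert (phi (S (psi n)) <= phi (psi (S n)))%nat. apply si_mono; auto. apply H2.
  specialize (H1 (psi n)). lia.
Qed.
Lemma si_id : strictly_incr (fun n => n).
Proof. intro n. lia. Qed.

Lemma sc_sub u x phi : strictly_incr phi -> seq_converges d u x -> seq_converges d (fun n => u (phi n)) x.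
Proof.
  intros Hp H eps He. destruct (H eps He) as [N HN]. exists N. intros n Hn.
  apply HN. pose proof (si_ge phi Hp n). lia.
Qed.
Lemma sc_const x : seq_converges d (fun _ => x) x.
Proof. intros eps He. exists 0%nat. intros. rewrite d_refl. auto. Qed.
Lemma sc_unique u x y : seq_converges d u x -> seq_converges d u y -> x = y.
Proof.
  intros H1 H2. apply NNPP. intro Hxy. pose proof (d_pos _ _ Hxy) as Hp.
  destruct (H1 (d x y / 2)) as [N1 HN1]. lra. destruct (H2 (d x y / 2)) as [N2 HN2]. lra.
  assert (A1 : (N1 <= N1 + N2)%nat) by lia. assert (A2 : (N2 <= N1 + N2)%nat) by lia.
  specialize (HN1 _ A1). specialize (HN2 _ A2).
  pose proof (d_tri x (u (N1 + N2)%nat) y). rewrite (d_sym x (u _)) in H. lra.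
Qed.
Lemma sc_const_eq x y : seq_converges d (fun _ => x) y -> x = y.
Proof. intro H. apply (sc_unique (fun _ => x)); auto. apply sc_const. Qed.

Lemma sc_cont g u x : seq_converges d u x -> seq_converges d (fun n => act g (u n)) (act g x).
Proof.
  intros H eps He. destruct (Hcont g x eps He) as [del [Hd Hdel]].
  destruct (H del Hd) as [N HN]. exists N. intros n Hn. rewrite d_sym. apply Hdel.
  rewrite d_sym. auto.
Qed.

Lemma closed_compact (C : B -> Prop) :
  (forall u x, (forall n, C (u n)) -> seq_converges d u x -> C x) -> m_compact_set d C.
Proof.
  intros Hc u Hu. destruct (Hcpt u (fun _ => I)) as [phi [Hphi [x [_ Hx]]]].
  exists phi. split; auto. exists x. split; auto. apply (Hc (fun n => u (phi n))); auto.
Qed.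

Lemma cball_compact c r : m_compact_set d (fun y => d c y <= r).
Proof.
  apply closed_compact. intros u x Hu Hx. apply Rnot_lt_le. intro Hlt.
  destruct (Hx (d c x - r)) as [N HN]. lra. specialize (HN N (le_n _)).
  specialize (Hu N). pose proof (d_tri c (u N) x). lra.
Qed.

Lemma cball_pt_compact c r w : m_compact_set d (fun y => d c y <= r \/ y = w).
Proof.
  apply closed_compact. intros u x Hu Hx.
  destruct (classic (x = w)) as [Hw|Hw]; [right; auto|left].
  apply Rnot_lt_le. intro Hlt. pose proof (d_pos _ _ Hw) as Hp.
  destruct (Hx (Rmin (d c x - r) (d x w))) as [N HN]. apply Rmin_pos; lra.
  specialize (HN N (le_n _)). destruct (Hu N) as [H1|H1].
  - pose proof (d_tri c (u N) x). pose proof (Rmin_l (d c x - r) (d x w)). lra.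
  - subst w. rewrite d_sym in HN. pose proof (Rmin_r (d c x - r) (d x (u N))). lra.
Qed.

Lemma far_compact a r : m_compact_set d (fun y => r <= d a y).
Proof.
  apply closed_compact. intros u x Hu Hx. apply Rnot_lt_le. intro Hlt.
  destruct (Hx (r - d a x)) as [N HN]. lra. specialize (HN N (le_n _)).
  specialize (Hu N). pose proof (d_tri a x (u N)). rewrite (d_sym x (u N)) in H. lra.
Qed.

Lemma image_compact (K : B -> Prop) g : m_compact_set d K ->
  m_compact_set d (fun v => exists k, K k /\ v = act g k).
Proof.
  intros HK u Hu. destruct (choice (fun n k => K k /\ u n = act g k)) as [k Hk].
  { intro n. destruct (Hu n) as [k Hk]. eauto. }
  destruct (HK k (fun n => proj1 (Hk n))) as [phi [Hphi [x [Hx Hc]]]].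
  exists phi. split; auto. exists (act g x). split. eauto.
  assert (E : (fun n => u (phi n)) = (fun n => act g (k (phi n)))).
  { apply functional_extensionality. intro n. apply Hk. }
  rewrite E. apply sc_cont. auto.
Qed.

Lemma luc_sub (g : nat -> G) a b phi : strictly_incr phi -> loc_unif_conv d act g a b ->
  loc_unif_conv d act (fun n => g (phi n)) a b.
Proof.
  intros Hp H K HK HKa eps He. destruct (H K HK HKa eps He) as [N HN].
  exists N. intros n Hn x Hx. apply HN; auto. pose proof (si_ge phi Hp n). lia.
Qed.

Lemma luc_pt (g : nat -> G) a b u y : loc_unif_conv d act g a b -> y <> a ->
  seq_converges d u y -> seq_converges d (fun n => act (g n) (u n)) b.
Proof.
  intros H Hy Hu eps He. pose proof (d_pos _ _ Hy) as Hp.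
  destruct (H (fun v => d y v <= d y a / 2) (cball_compact _ _)) with (eps := eps) as [N1 HN1]; auto.
  { intros x Hx Hxa. subst x. lra. }
  destruct (Hu (d y a / 2)) as [N2 HN2]. lra.
  exists (N1 + N2)%nat. intros n Hn. apply HN1. lia.
  rewrite d_sym. left. apply HN2. lia.
Qed.

Lemma luc_const (g : nat -> G) a b y : loc_unif_conv d act g a b -> y <> a ->
  seq_converges d (fun n => act (g n) y) b.
Proof. intros. apply (luc_pt g a b (fun _ => y) y); auto. apply sc_const. Qed.

Lemma luc_inv (g : nat -> G) a b w : loc_unif_conv d act g a b -> w <> b ->
  seq_converges d (fun n => act (inv (g n)) w) a.
Proof.
  intros H Hw. pose proof (d_pos _ _ Hw) as Hp. apply NNPP. intro Hn.
  unfold seq_converges in Hn. apply not_all_ex_not in Hn. destruct Hn as [del Hn].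
  apply imply_to_and in Hn. destruct Hn as [Hdel Hn].
  destruct (H (fun y => del <= d a y) (far_compact _ _)) with (eps := d w b) as [N HN]; auto.
  { intros x Hx Hxa. subst x. rewrite d_refl in Hx. lra. }
  assert (exists n, (N <= n)%nat /\ del <= d (act (inv (g n)) w) a) as [n [Hn1 Hn2]].
  { apply NNPP. intro Hc. apply Hn. exists N. intros n Hn'.
    apply Rnot_le_lt. intro. apply Hc. eauto. }
  specialize (HN n Hn1 (act (inv (g n)) w)). rewrite act_inv_r in HN.
  rewrite d_sym in Hn2. specialize (HN Hn2). lra.
Qed.


Lemma sc_ext (u v : nat -> B) x : (forall n, u n = v n) -> seq_converges d u x -> seq_converges d v x.
Proof. intros H Hu eps He. destruct (Hu eps He) as [N HN]. exists N. intros. rewrite <- H. auto. Qed.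

Lemma lim_le (u : nat -> B) L c r : seq_converges d u L ->
  (exists N, forall n, (N <= n)%nat -> d c (u n) < r) -> d c L <= r.
Proof.
  intros Hu [N HN]. apply Rnot_lt_le. intro Hc.
  destruct (Hu (d c L - r)) as [N2 HN2]. lra.
  specialize (HN (N + N2)%nat ltac:(lia)). specialize (HN2 (N + N2)%nat ltac:(lia)).
  pose proof (d_tri c (u (N + N2)%nat) L). lra.
Qed.

Lemma gpow_S s k y : act (gpow mul e s (S k)) y = act s (act (gpow mul e s k) y).
Proof. simpl. apply act_mul. Qed.

Lemma gpow_add s m n : gpow mul e s (m + n) = mul (gpow mul e s m) (gpow mul e s n).
Proof. induction m; simpl. rewrite g_el. auto. rewrite IHm, g_assoc. auto. Qed.

Lemma gpow_comm s k y : act (gpow mul e s k) (act s y) = act s (act (gpow mul e s k) y).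
Proof. induction k. simpl. rewrite !act_e. auto. rewrite !gpow_S, IHk. auto. Qed.

Lemma gpow_inv_comm s k y :
  act s (act (inv (gpow mul e s k)) y) = act (inv (gpow mul e s k)) (act s y).
Proof.
  apply (act_inj (gpow mul e s k)). rewrite gpow_comm, !act_inv_r. auto.
Qed.

Lemma gpow_fix s k y : act s y = y -> act (gpow mul e s k) y = y.
Proof. intro H. induction k. simpl. apply act_e. rewrite gpow_S, IHk. auto. Qed.

Lemma gpow_inj s : (forall n, (1 <= n)%nat -> gpow mul e s n <> e) ->
  forall m n, gpow mul e s m = gpow mul e s n -> m = n.
Proof.
  intros H.
  assert (Hl : forall m n, (m < n)%nat -> gpow mul e s m <> gpow mul e s n).
  { intros m n Hmn Heq. apply (H (n - m)%nat). lia.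
    replace n with (m + (n - m))%nat in Heq by lia. rewrite gpow_add in Heq.
    apply (g_cancel_l (gpow mul e s m)). rewrite g_er. auto. }
  intros m n Heq. destruct (Nat.lt_trichotomy m n) as [h|[h|h]]; auto; exfalso.
  apply (Hl m n h Heq). apply (Hl n m h). auto.
Qed.

Lemma lox_core s be rho rho' w u : 0 < rho' -> rho' < rho -> rho' < d be w -> rho < d be u ->
  (forall y, (d be y <= rho \/ y = w) -> d be (act s y) < rho') -> loxodromic mul e act s.
Proof.
  intros H0 H1 H2 H3 HN.
  set (N := fun y => d be y <= rho \/ y = w).
  assert (HNN : forall y, N y -> N (act s y)).
  { intros y Hy. left. specialize (HN y Hy). lra. }
  assert (Hpow : forall k y, N y -> N (act (gpow mul e s k) y)).
  { induction k; intros y Hy. simpl. rewrite act_e. auto. rewrite gpow_S. auto. }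
  assert (Hpow1 : forall k y, (1 <= k)%nat -> N y -> d be (act (gpow mul e s k) y) < rho').
  { intros k y Hk Hy. destruct k. lia. rewrite gpow_S. apply HN, Hpow, Hy. }
  assert (Hord : forall n, (1 <= n)%nat -> gpow mul e s n <> e).
  { intros n Hn Heq. pose proof (Hpow1 n w Hn (or_intror eq_refl)). rewrite Heq, act_e in H. lra. }
  destruct (Hconv (fun k => gpow mul e s k) (gpow_inj s Hord)) as [phi [Hphi [al2 [be2 Hl]]]].
  assert (Hbw : be <> w). { intro. subst. rewrite d_refl in H2. lra. }
  assert (Hb2 : d be be2 <= rho').
  { assert (exists v, N v /\ v <> al2) as [v [Hv Hva]].
    { destruct (classic (be = al2)). exists w. split. right; auto. congruence.
      exists be. split. left. rewrite d_refl. lra. auto. }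
    apply (lim_le (fun k => act (gpow mul e s (phi k)) v)). apply (luc_const _ al2); auto.
    exists 1%nat. intros n Hn. apply Hpow1; auto. pose proof (si_ge phi Hphi n). lia. }
  assert (Hfb : act s be2 = be2).
  { destruct (Hinf (al2 :: act (inv s) al2 :: nil)) as [y Hy].
    assert (Hy1 : y <> al2). { intro. apply Hy. simpl. auto. }
    assert (Hy2 : act s y <> al2). { intro Hc. apply Hy. simpl. right. left. rewrite <- Hc, act_inv_l. auto. }
    apply (sc_unique (fun k => act (gpow mul e s (phi k)) (act s y))).
    apply (sc_ext (fun k => act s (act (gpow mul e s (phi k)) y))).
    intro. rewrite gpow_comm. auto. apply sc_cont. apply (luc_const _ al2); auto.
    apply (luc_const _ al2); auto. }
  assert (Hinv : forall w', w' <> be2 -> seq_converges d (fun k => act (inv (gpow mul e s (phi k))) w') al2).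
  { intros. apply (luc_inv _ _ be2); auto. }
  assert (Hfa : act s al2 = al2).
  { destruct (Hinf (be2 :: nil)) as [y Hy].
    assert (Hy1 : y <> be2). { intro. apply Hy. simpl. auto. }
    assert (Hy2 : act s y <> be2). { intro Hc. apply Hy1. rewrite <- Hfb in Hc. apply act_inj in Hc. auto. }
    apply (sc_unique (fun k => act s (act (inv (gpow mul e s (phi k))) y))).
    apply sc_cont. apply Hinv. auto.
    apply (sc_ext (fun k => act (inv (gpow mul e s (phi k))) (act s y))).
    intro. rewrite gpow_inv_comm. auto. apply Hinv. auto. }
  assert (Hab : al2 <> be2).
  { intro Hab. subst al2.
    assert (Hu : u <> be2). { intro. subst. lra. }
    specialize (Hinv u Hu). destruct (Hinv (rho - rho')) as [K HK]. lra.
    set (k := (K + 1)%nat).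
    specialize (HK k ltac:(unfold k; lia)).
    assert (HNk : N (act (inv (gpow mul e s (phi k))) u)).
    { left. pose proof (d_tri be be2 (act (inv (gpow mul e s (phi k))) u)).
      rewrite (d_sym be2) in H. lra. }
    pose proof (Hpow1 (phi k) _ ltac:(pose proof (si_ge phi Hphi k); unfold k in *; lia) HNk).
    rewrite act_inv_r in H. lra. }
  split. auto. exists al2, be2. repeat split; auto.
  intros y Hy. destruct (classic (y = al2)). auto. right.
  apply (sc_const_eq y). apply (sc_ext (fun k => act (gpow mul e s (phi k)) y)).
  intro. apply gpow_fix. auto. apply (luc_const _ al2); auto.
Qed.

Lemma lox_conv (s : nat -> G) al be : loc_unif_conv d act s al be -> al <> be ->
  exists n, loxodromic mul e act (s n).
Proof.
  intros H Hab. destruct (Hinf (al :: be :: nil)) as [w Hw].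
  assert (Hwa : w <> al). { intro. apply Hw. simpl. auto. }
  assert (Hwb : w <> be). { intro. apply Hw. simpl. auto. }
  pose proof (d_pos _ _ Hab) as Hp. pose proof (d_pos _ _ Hwb) as Hp2.
  rewrite d_sym in Hp. rewrite d_sym in Hp2.
  set (rho := d be al / 2). set (rho' := Rmin (rho / 2) (d be w / 2)).
  assert (Hr' : 0 < rho'). { unfold rho', rho. apply Rmin_pos; lra. }
  destruct (H _ (cball_pt_compact be rho w)) with (eps := rho') as [N HN]; auto.
  { intros x [Hx|Hx] Hxa. subst x. unfold rho in Hx. lra. congruence. }
  exists N. apply (lox_core (s N) be rho rho' w al); auto.
  - unfold rho', rho. pose proof (Rmin_l (d be al / 2 / 2) (d be w / 2)). lra.
  - unfold rho'. pose proof (Rmin_r (rho / 2) (d be w / 2)). lra.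
  - unfold rho. lra.
  - intros y Hy. rewrite d_sym. apply HN; auto.
Qed.

Lemma conj_mul g a b : mul (mul g (mul a (inv g))) (mul g (mul b (inv g))) = mul g (mul (mul a b) (inv g)).
Proof.
  rewrite !g_assoc. rewrite <- (g_assoc (mul g a) (inv g) g). rewrite g_il, g_er. auto.
Qed.

Lemma gpow_conj g h n : gpow mul e (mul g (mul h (inv g))) n = mul g (mul (gpow mul e h n) (inv g)).
Proof.
  induction n; simpl. rewrite g_el, g_ir. auto. rewrite IHn, conj_mul. auto.
Qed.

Lemma lox_conj g h : loxodromic mul e act (mul g (mul h (inv g))) -> loxodromic mul e act h.
Proof.
  intros [Ho [a [b [Hab [Ha [Hb Hx]]]]]]. split.
  - intros n Hn Heq. apply (Ho n Hn). rewrite gpow_conj, Heq, g_el, g_ir. auto.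
  - exists (act (inv g) a), (act (inv g) b). split. intro Hc. apply act_inj in Hc. auto.
    assert (Ht : forall y, act (mul g (mul h (inv g))) y = act g (act h (act (inv g) y))).
    { intro. rewrite !act_mul. auto. }
    split. apply (act_inj g). rewrite act_inv_r. rewrite <- Ha at 2. rewrite Ht. auto.
    split. apply (act_inj g). rewrite act_inv_r. rewrite <- Hb at 2. rewrite Ht. auto.
    intros y Hy. destruct (Hx (act g y)) as [H|H].
    rewrite Ht, act_inv_l, Hy. auto.
    left. rewrite <- H, act_inv_l. auto. right. rewrite <- H, act_inv_l. auto.
Qed.

Section Para.
Variable p : B.
Hypothesis Hpar : parabolic_point mul e act p.
Variable gens : list G.
Hypothesis Hgen : forall h, stabilizer act p h ->
  exists w, Forall (fun s => In s gens /\ stabilizer act p s) w /\ h = word_prod mul e w.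

Definition cj g h := mul g (mul h (inv g)).

Lemma no_lox_stab (s : nat -> G) al be : (forall n, stabilizer act p (s n)) ->
  loc_unif_conv d act s al be -> al = be.
Proof.
  intros Hs H. apply NNPP. intro Hab. destruct (lox_conv s al be H Hab) as [n Hn].
  apply (proj2 Hpar (s n)); auto.
Qed.

Lemma stab_luc (s : nat -> G) al be : (forall n, stabilizer act p (s n)) ->
  loc_unif_conv d act s al be -> al = p /\ be = p.
Proof.
  intros Hs H. pose proof (no_lox_stab s al be Hs H). subst be.
  destruct (classic (al = p)). auto. exfalso. apply H0.
  symmetry. apply (sc_const_eq p). apply (sc_ext (fun n => act (s n) p)). intro. apply Hs.
  apply (luc_const s al); auto.
Qed.

Lemma fix_stab y : (forall h, stabilizer act p h -> act h y = y) -> y = p.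
Proof.
  intro Hy. destruct (inf_seq _ (proj1 Hpar)) as [f [Hf Hinj]].
  destruct (Hconv f Hinj) as [phi [Hphi [al [be Hl]]]].
  destruct (stab_luc (fun n => f (phi n)) al be (fun n => Hf _) Hl) as [H1 H2]. subst.
  apply NNPP. intro Hyp. apply Hyp. apply (sc_const_eq y).
  apply (sc_ext (fun n => act (f (phi n)) y)). intro. apply Hy, Hf.
  apply (luc_const _ p); auto.
Qed.

Definition CD (g : nat -> G) a b :=
  (forall m n, g m = g n -> m = n) /\ seq_converges d (fun n => act (g n) p) a /\
  loc_unif_conv d act g p b.

Lemma CD_sub g a b phi : strictly_incr phi -> CD g a b -> CD (fun n => g (phi n)) a b.
Proof.
  intros Hp [H1 [H2 H3]]. split. intros m n Hmn. apply H1 in Hmn.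
  destruct (Nat.lt_trichotomy m n) as [h|[h|h]]; auto; exfalso.
  assert (phi m < phi n)%nat. { pose proof (si_mono phi Hp (S m) n h). pose proof (Hp m). lia. } lia.
  assert (phi n < phi m)%nat. { pose proof (si_mono phi Hp (S n) m h). pose proof (Hp n). lia. } lia.
  split. apply (sc_sub (fun n => act (g n) p)); auto. apply luc_sub; auto.
Qed.

Lemma cj_act g h y : act (cj g h) (act g y) = act g (act h y).
Proof. unfold cj. rewrite !act_mul, act_inv_l. auto. Qed.

Lemma step1 g a b h : a <> b -> CD g a b -> stabilizer act p h ->
  exists t, forall N, exists n, (N <= n)%nat /\ cj (g n) h = t.
Proof.
  intros Hab [Hinj [Hs Hl]] Hh. apply NNPP. intro Hc.
  assert (Hc' : forall t, exists N, forall n, (N <= n)%nat -> cj (g n) h <> t).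
  { intro t. apply NNPP. intro Hn. apply Hc. exists t. intro N. apply NNPP. intro Hm.
    apply Hn. exists N. intros n Hn1 Heq. apply Hm. eauto. }
  destruct (inj_sub _ Hc') as [phi [Hphi Hi]].
  destruct (Hconv (fun n => cj (g (phi n)) h) Hi) as [phi2 [Hphi2 [al [be Hl2]]]].
  set (psi := fun n => phi (phi2 n)).
  assert (Hpsi : strictly_incr psi) by (unfold psi; apply si_comp; auto).
  assert (Hlp : loc_unif_conv d act (fun n => g (psi n)) p b) by (apply luc_sub; [exact Hpsi | exact Hl]).
  assert (Hsp : seq_converges d (fun n => act (g (psi n)) p) a) by (apply (sc_sub (fun n => act (g n) p)); [exact Hpsi | exact Hs]).
  assert (Hhp : act h p = p) by apply Hh.
  assert (Hab2 : al <> be).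
  { intro Hae. subst be. destruct (classic (al = b)) as [Hb|Hb].
    - subst al. apply Hab. apply (sc_unique (fun n => act (cj (g (psi n)) h) (act (g (psi n)) p))).
      apply (sc_ext (fun n => act (g (psi n)) p)). intro. rewrite cj_act, Hhp. auto. auto.
      apply (luc_pt _ b b _ a); auto.
    - apply Hb. destruct (Hinf (p :: nil)) as [y Hy].
      assert (Hyp : y <> p) by (intro; apply Hy; simpl; auto).
      assert (Hhy : act h y <> p). { intro Hc2. apply Hyp. rewrite <- Hhp in Hc2. apply act_inj in Hc2. auto. }
      apply (sc_unique (fun n => act (cj (g (psi n)) h) (act (g (psi n)) y))).
      apply (luc_pt _ al al _ b); auto. apply (luc_const _ p); auto.
      apply (sc_ext (fun n => act (g (psi n)) (act h y))). intro. rewrite cj_act. auto.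
      apply (luc_const _ p); auto. }
  destruct (lox_conv _ _ _ Hl2 Hab2) as [n Hn].
  apply (proj2 Hpar h Hh). apply (lox_conj (g (phi (phi2 n)))). auto.
Qed.

Lemma step2 l : forall g a b, a <> b -> CD g a b -> exists psi, strictly_incr psi /\
  forall s, In s l -> stabilizer act p s -> forall n, cj (g (psi n)) s = cj (g (psi 0%nat)) s.
Proof.
  induction l as [|s l IH]; intros g a b Hab Hg.
  - exists (fun n => n). split. apply si_id. intros s Hs. inversion Hs.
  - destruct (IH g a b Hab Hg) as [psi [Hpsi Hp]].
    destruct (classic (stabilizer act p s)) as [Hs|Hs].
    + destruct (step1 _ a b s Hab (CD_sub _ _ _ _ Hpsi Hg) Hs) as [t Ht].
      destruct (sub_freq _ Ht) as [psi2 [Hpsi2 Hp2]].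
      exists (fun n => psi (psi2 n)). split. apply si_comp; auto.
      intros s' [Hs'|Hs'] Hst n.
      * subst s'. rewrite (Hp2 n), (Hp2 0%nat). auto.
      * rewrite (Hp s' Hs' Hst), (Hp s' Hs' Hst (psi2 0%nat)). auto.
    + exists psi. split; auto. intros s' [Hs'|Hs'] Hst n. subst; contradiction. auto.
Qed.

Lemma cj_e g : cj g e = e.
Proof. unfold cj. rewrite g_el, g_ir. auto. Qed.

Lemma cj_mul g a b : cj g (mul a b) = mul (cj g a) (cj g b).
Proof. unfold cj. rewrite conj_mul. auto. Qed.

Theorem para_not_conical : ~ conical_limit_point d act p.
Proof.
  intros [g [a [b [Hab [Hs Hl]]]]].
  assert (Hnf : forall t, exists N, forall n, (N <= n)%nat -> g n <> t).
  { intro t. apply NNPP. intro Hc.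
    assert (Hf : forall N, exists n, (N <= n)%nat /\ g n = t).
    { intro N. apply NNPP. intro Hm. apply Hc. exists N. intros n Hn Heq. apply Hm. eauto. }
    destruct (sub_freq _ Hf) as [phi [Hphi Hp]].
    assert (Hval : forall y, y <> p -> act t y = b).
    { intros y Hy. apply (sc_const_eq (act t y)). apply (sc_ext (fun n => act (g (phi n)) y)).
      intro. rewrite Hp. auto. apply (luc_const _ p); auto. apply luc_sub; auto. }
    destruct (Hinf (p :: nil)) as [y1 Hy1]. destruct (Hinf (p :: y1 :: nil)) as [y2 Hy2].
    assert (y1 <> p) by (intro; apply Hy1; simpl; auto).
    assert (y2 <> p) by (intro; apply Hy2; simpl; auto).
    assert (y2 <> y1) by (intro; apply Hy2; simpl; auto).
    apply H1. apply (act_inj t). rewrite !Hval; auto. }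
  destruct (inj_sub _ Hnf) as [phi0 [Hphi0 Hi0]].
  assert (Hcd0 : CD (fun n => g (phi0 n)) a b).
  { split. auto. split. apply (sc_sub (fun n => act (g n) p)); auto. apply luc_sub; auto. }
  destruct (step2 gens _ a b Hab Hcd0) as [psi [Hpsi Hc]].
  set (g1 := fun n => g (phi0 (psi n))).
  assert (Hcd1 : CD g1 a b) by (apply (CD_sub _ _ _ psi Hpsi Hcd0)).
  assert (Hcw : forall h, stabilizer act p h -> forall n, cj (g1 n) h = cj (g1 0%nat) h).
  { intros h Hh n. destruct (Hgen h Hh) as [w [Hw Hhw]]. subst h. clear Hh.
    induction Hw. simpl. rewrite !cj_e. auto.
    simpl. rewrite !cj_mul, IHHw. f_equal. apply (Hc x); apply H. }
  set (c := fun n => mul (inv (g1 0%nat)) (g1 n)).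
  assert (Hcact : forall n z, act (g1 n) z = act (g1 0%nat) (act (c n) z)).
  { intros. unfold c. rewrite !act_mul, act_inv_r. auto. }
  assert (Hcs : forall n, stabilizer act p (c n)).
  { intro n. unfold stabilizer. apply fix_stab. intros h Hh.
    apply (act_inj (g1 0%nat)). rewrite <- (cj_act (g1 0%nat) h (act (c n) p)).
    rewrite <- !Hcact. rewrite <- (Hcw h Hh n). rewrite cj_act.
    unfold stabilizer in Hh. rewrite Hh. auto. }
  assert (Hci : forall m n, c m = c n -> m = n).
  { intros m n Hmn. apply (proj1 Hcd1). apply (g_cancel_l (inv (g1 0%nat))). auto. }
  destruct (Hconv c Hci) as [phi [Hphi [al [be Hl2]]]].
  destruct (stab_luc (fun n => c (phi n)) al be (fun n => Hcs _) Hl2) as [H1 H2]. subst al be.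
  destruct (Hinf (p :: nil)) as [y Hy]. assert (Hyp : y <> p) by (intro; apply Hy; simpl; auto).
  apply Hab. destruct Hcd1 as [_ [Hs1 Hl1]].
  assert (Ha : a = act (g1 0%nat) p).
  { symmetry. apply (sc_const_eq (act (g1 0%nat) p)). apply (sc_ext (fun n => act (g1 n) p)).
    intro n. rewrite (Hcact n p). rewrite (Hcs n). auto. auto. }
  rewrite Ha. apply (sc_unique (fun n => act (g1 (phi n)) y)).
  apply (sc_ext (fun n => act (g1 0%nat) (act (c (phi n)) y))). intro n. rewrite (Hcact (phi n) y). auto.
  apply sc_cont. apply (luc_const _ p); auto.
  apply (luc_const _ p); auto. apply luc_sub; auto.
Qed.

End Para.

Lemma conical_transport x h : conical_limit_point d act x -> conical_limit_point d act (act h x).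
Proof.
  intros [g [a [b [Hab [Hs Hl]]]]]. exists (fun n => mul (g n) (inv h)), a, b. split; auto.
  split.
  - apply (sc_ext (fun n => act (g n) x)). intro. rewrite act_mul, act_inv_l. auto. auto.
  - intros K HK HKx eps He.
    destruct (Hl (fun v => exists k, K k /\ v = act (inv h) k) (image_compact K (inv h) HK))
      with (eps := eps) as [N HN]; auto.
    { intros v [k [Hk Hv]] Hvx. subst v. apply (HKx k Hk). rewrite <- Hvx, act_inv_r. auto. }
    exists N. intros n Hn y Hy. rewrite act_mul. apply HN; eauto.
Qed.

Section Coding.
Variable eps : R.
Hypothesis Heps : 0 < eps.
Variables (Z : list B) (V W Vh Wh : B -> B -> Prop) (L : B -> G -> Prop).
Hypothesis HC1 : forall z, In z Z -> diam_lt d (W z) eps.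
Hypothesis HC2 : forall z, In z Z -> diam_gt d (Wh z) (4 * eps).
Hypothesis HC3 : forall z, In z Z -> forall x, closed_nbhd d (2 * eps) (Vh z) x -> Wh z x.
Hypothesis HC4 : forall z, In z Z -> forall x,
     W z x <-> (x = z \/ exists a y, L z a /\ Wh z y /\ x = act a y).
Hypothesis HC5 : forall z, In z Z -> forall x, m_closure d (V z) x -> W z x.
Variables (zs : nat -> B) (als : nat -> G).
Hypothesis Hpath : edge_path Z Vh V L zs als.

Definition gam k := label_prod mul e als k.
Definition Aset k xi := exists y, m_closure d (W (zs k)) y /\ xi = act (gam k) y.

Lemma inZ k : In (zs k) Z. Proof. apply (Hpath k). Qed.
Lemma lab k : L (zs k) (als k). Proof. apply (Hpath k). Qed.
Lemma gam_S k y : act (gam (S k)) y = act (gam k) (act (als k) y).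
Proof. unfold gam. simpl. apply act_mul. Qed.
Lemma cl_in z x : W z x -> m_closure d (W z) x.
Proof. intros H s Hs. exists x. rewrite d_refl. auto. Qed.

Lemma N1 k u v : m_closure d (W (zs (S k))) u -> ~ Wh (zs k) v -> eps < d u v.
Proof.
  intros Hu Hv. destruct (Hpath k) as [_ [_ [_ [x0 [Hx0 Hx1]]]]].
  assert (Wx0 : W (zs (S k)) x0). { apply HC5. apply inZ. intros s Hs. exists x0. rewrite d_refl. auto. }
  destruct (HC1 _ (inZ (S k))) as [r [Hr Hdr]].
  assert (Hux : d u x0 <= r).
  { apply Rnot_lt_le. intro Hc. destruct (Hu (d u x0 - r)) as [a0 [Ha0 Hd]]. lra.
    pose proof (Hdr a0 x0 Ha0 Wx0). pose proof (d_tri u a0 x0). lra. }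
  apply Rnot_le_lt. intro Hc. apply Hv. apply HC3. apply inZ.
  intros s Hs. exists x0. split; auto. pose proof (d_tri v u x0). rewrite (d_sym v u) in H. lra.
Qed.

Lemma N1b k u : m_closure d (W (zs (S k))) u -> Wh (zs k) u.
Proof. intro H. apply NNPP. intro Hc. pose proof (N1 k u u H Hc). rewrite d_refl in H0. lra. Qed.

Lemma step_in k y : Wh (zs k) y -> W (zs k) (act (als k) y).
Proof. intro H. apply (HC4 _ (inZ k)). right. exists (als k), y. split. apply lab. auto. Qed.

Lemma N3 n j y : Wh (zs (n + j)) y -> exists w, W (zs n) w /\ act (gam (S (n + j))) y = act (gam n) w.
Proof.
  revert y. induction j; intros y Hy.
  - rewrite Nat.add_0_r in *. exists (act (als n) y). split. apply step_in; auto. apply gam_S.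
  - replace (n + S j)%nat with (S (n + j)) in * by lia.
    assert (Hw : Wh (zs (n + j)) (act (als (S (n + j))) y)).
    { apply N1b. apply cl_in. apply step_in. auto. }
    destruct (IHj _ Hw) as [w [Hw1 Hw2]]. exists w. split; auto.
    rewrite gam_S. auto.
Qed.

Lemma gam_inj m n : gam m = gam n -> m = n.
Proof.
  assert (Hl : forall n1 j, gam n1 <> gam (S (n1 + j))).
  { intros n1 j Heq. destruct (HC2 _ (inZ (n1 + j))) as [p1 [p2 [Hp1 [Hp2 Hd]]]].
    destruct (HC1 _ (inZ n1)) as [r [Hr Hdr]].
    destruct (N3 n1 j p1 Hp1) as [w1 [Hw1 E1]]. destruct (N3 n1 j p2 Hp2) as [w2 [Hw2 E2]].
    rewrite <- Heq in E1, E2. apply act_inj in E1. apply act_inj in E2. subst.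
    pose proof (Hdr _ _ Hw1 Hw2). lra. }
  intro H. destruct (Nat.lt_trichotomy m n) as [h|[h|h]]; auto; exfalso.
  - apply (Hl m (n - m - 1)%nat). replace (S (m + (n - m - 1))) with n by lia. auto.
  - apply (Hl n (m - n - 1)%nat). replace (S (n + (m - n - 1))) with m by lia. auto.
Qed.

Lemma A_nest k xi : Aset (S k) xi -> Aset k xi.
Proof.
  intros [y [Hy Hxi]]. exists (act (als k) y). split. apply cl_in. apply step_in. apply N1b. auto.
  rewrite Hxi. apply gam_S.
Qed.

Lemma A_le k m xi : (k <= m)%nat -> Aset m xi -> Aset k xi.
Proof. intro H. induction H; auto. intro. apply IHle. apply A_nest. auto. Qed.

Lemma W_self k : W (zs k) (zs k).
Proof. apply (HC4 _ (inZ k)). left. auto. Qed.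

Lemma A_exist : exists zeta, forall k, Aset k zeta.
Proof.
  destruct (Hcpt (fun k => act (gam k) (zs k)) (fun _ => I)) as [phi [Hphi [z [_ Hz]]]].
  exists z. intro k. exists (act (inv (gam k)) z). split.
  - intros s Hs. destruct (Hcont (inv (gam k)) z (s / 2)) as [del [Hdel Hd]]. lra.
    destruct (Hz del Hdel) as [N HN].
    set (j := (N + k)%nat).
    assert (HA : Aset k (act (gam (phi j)) (zs (phi j)))).
    { apply (A_le k (phi j)). pose proof (si_ge phi Hphi j). unfold j in *. lia.
      exists (zs (phi j)). split. apply cl_in, W_self. auto. }
    destruct HA as [y [Hy Hyy]].
    destruct (Hy (s / 2)) as [a0 [Ha0 Hda]]. lra.
    exists a0. split; auto.
    specialize (HN j ltac:(unfold j; lia)). rewrite d_sym in HN. specialize (Hd _ HN).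
    rewrite Hyy, act_inv_l in Hd. pose proof (d_tri (act (inv (gam k)) z) y a0). lra.
  - rewrite act_inv_r. auto.
Qed.

Lemma sep n m xi c : (n < m)%nat -> (forall k, Aset k xi) ->
  ~ (exists w, W (zs n) w /\ c = act (gam n) w) ->
  eps < d (act (inv (gam m)) xi) (act (inv (gam m)) c).
Proof.
  intros Hnm Hxi Hc. destruct m. lia.
  destruct (Hxi (S m)) as [y [Hy Hyx]]. rewrite Hyx, act_inv_l.
  apply (N1 m). auto. intro Hw.
  replace m with (n + (m - n))%nat in Hw by lia.
  destruct (N3 n (m - n) _ Hw) as [w [Hw1 Hw2]]. apply Hc. exists w. split; auto.
  replace (S (n + (m - n))) with (S m) in Hw2 by lia. rewrite act_inv_r in Hw2. auto.
Qed.

Lemma c_exist a : exists n c, (n <= 1)%nat /\ c <> a /\ ~ (exists w, W (zs n) w /\ c = act (gam n) w).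
Proof.
  apply NNPP. intro Hc.
  assert (H : forall n c, (n <= 1)%nat -> c <> a -> exists w, W (zs n) w /\ c = act (gam n) w).
  { intros n c Hn Hca. apply NNPP. intro Hw. apply Hc. exists n, c. auto. }
  destruct (HC2 _ (inZ 0)) as [p1 [p2 [Hp1 [Hp2 Hd]]]].
  assert (Hg0 : forall y, act (gam 0) y = y). { intro. apply act_e. }
  assert (Hg1 : forall y, act (gam 1) y = act (als 0) y). { intro. rewrite gam_S. apply Hg0. }
  assert (HaW : ~ W (zs 0) a).
  { intro HaW. destruct (HC1 _ (inZ 0)) as [r [Hr Hdr]].
    assert (HW : forall c, W (zs 0) c).
    { intro c. destruct (classic (c = a)). subst; auto.
      destruct (H 0%nat c ltac:(lia) H0) as [w [Hw Hcw]]. rewrite Hcw, Hg0. auto. }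
    pose proof (Hdr p1 p2 (HW _) (HW _)). lra. }
  assert (Hq : forall q, Wh (zs 0) q -> W (zs 1) q).
  { intros q Hq. destruct (H 1%nat (act (als 0) q) ltac:(lia)) as [w [Hw Hqw]].
    intro Hc2. apply HaW. rewrite <- Hc2. apply step_in. auto.
    rewrite Hg1 in Hqw. apply act_inj in Hqw. subst. auto. }
  destruct (HC1 _ (inZ 1)) as [r [Hr Hdr]].
  pose proof (Hdr _ _ (Hq _ Hp1) (Hq _ Hp2)). lra.
Qed.

Lemma close_contra (u v : nat -> B) x (phi : nat -> nat) : strictly_incr phi ->
  seq_converges d u x -> seq_converges d v x ->
  (forall k, (2 <= phi k)%nat -> eps < d (u k) (v k)) -> False.
Proof.
  intros Hp Hu Hv H. destruct (Hu (eps / 2)) as [N1 HN1]. lra. destruct (Hv (eps / 2)) as [N2 HN2]. lra.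
  set (k := (N1 + N2 + 2)%nat).
  specialize (HN1 k ltac:(unfold k; lia)). specialize (HN2 k ltac:(unfold k; lia)).
  specialize (H k ltac:(pose proof (si_ge phi Hp k); unfold k in *; lia)).
  pose proof (d_tri (u k) x (v k)). rewrite (d_sym x (v k)) in H0. lra.
Qed.

Theorem coding_main : exists zeta, (forall k, Aset k zeta) /\
  (forall xi, (forall k, Aset k xi) -> xi = zeta) /\ conical_limit_point d act zeta.
Proof.
  assert (Hi : forall m n, inv (gam m) = inv (gam n) -> m = n).
  { intros m n H. apply gam_inj. apply g_inv_inj. auto. }
  destruct (Hconv _ Hi) as [phi [Hphi [a [b Hl]]]].
  destruct (c_exist a) as [n0 [c [Hn0 [Hca Hc]]]].
  assert (Hsc : seq_converges d (fun k => act (inv (gam (phi k))) c) b) by (apply (luc_const _ a); auto).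
  assert (U : forall xi, (forall k, Aset k xi) -> xi = a).
  { intros xi Hxi. apply NNPP. intro Hxa.
    apply (close_contra (fun k => act (inv (gam (phi k))) xi) (fun k => act (inv (gam (phi k))) c) b phi); auto.
    apply (luc_const _ a); auto.
    intros k Hk. apply (sep n0); auto. lia. }
  destruct A_exist as [zeta Hz]. pose proof (U zeta Hz). subst zeta.
  exists a. split; auto. split. auto.
  destruct (Hcpt (fun k => act (inv (gam (phi k))) a) (fun _ => I)) as [phi2 [Hphi2 [a' [_ Ha']]]].
  exists (fun k => inv (gam (phi (phi2 k)))), a', b. split.
  - intro Hab. subst a'.
    apply (close_contra (fun k => act (inv (gam (phi (phi2 k)))) a) (fun k => act (inv (gam (phi (phi2 k)))) c) b (fun k => phi (phi2 k))); auto.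
    apply si_comp; auto. apply (sc_sub (fun k => act (inv (gam (phi k))) c)); auto.
    intros k Hk. apply (sep n0); auto. lia.
  - split; auto. apply (luc_sub (fun k => inv (gam (phi k)))); auto.
Qed.

End Coding.
End Basics.
Theorem mainTheorem10
  (* the group Gamma *)
  (G : Type) (mul : G -> G -> G) (inv : G -> G) (e : G)
  (HG : is_group mul inv e)
  (* finite symmetric generating set S; the peripheral structure Ps *)
  (S : list G) (Ps : list (G -> Prop))
  (HSsym : forall s, In s S -> In (inv s) S)
  (HSgen : forall g, exists l, Forall (fun s => In s S) l /\ g = word_prod mul e l)
  (HPs_ne : Ps <> nil)
  (HPinf : forall P, In P Ps -> ~ finite_set P)
  (HPgen : forall P, In P Ps -> forall g, P g ->
             exists l, Forall (fun s => In s S /\ P s) l /\ g = word_prod mul e l)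
  (* the Bowditch boundary (B, d) with the action of Gamma, and the set Pi *)
  (B : Type) (B0 : B) (d : B -> B -> R) (act : G -> B -> B) (Pi : list B)
  (Hrh : rel_hyp_boundary mul inv e Ps B0 d act Pi)
  (Hnonelem : ~ finite_set (fun _ : B => True))
  (* the constant D *)
  (D : R) (HD0 : 0 < D)
  (HD : forall x y, x <> y -> exists g, D < d (act g x) (act g y))
  (* the compact sets K_p and the constant D_Pi *)
  (K : B -> B -> Prop) (DPi : R) (HDPi0 : 0 < DPi)
  (HK : forall p, In p Pi ->
     m_compact_set d (K p) /\ (forall x, K p x -> x <> p) /\
     (forall x, x <> p <-> exists h k, stabilizer act p h /\ K p k /\ x = act h k) /\
     diam_gt d (K p) DPi /\ setdist_gt d (K p) p DPi)
  (* the automaton data *)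
  (eps : R) (Heps0 : 0 < eps) (HepsD : eps < D / 5) (HepsPi : eps < DPi / 5)
  (Z : list B) (V W Vh Wh : B -> B -> Prop) (L : B -> G -> Prop) (alpha : B -> G)
  (Hconical : forall z, In z Z -> ~ in_parabolic_orbit act Pi z ->
     (forall a, L z a <-> a = alpha z) /\
     (forall y, Vh z y <-> V z (act (alpha z) y)) /\
     (forall y, Wh z y <-> W z (act (alpha z) y)))
  (Hparabolic : forall z g p, In z Z -> In p Pi -> z = act g p ->
     (exists F : G -> Prop, finite_set F /\
        forall a, L z a <-> (stabilizer act p (mul (inv g) a) /\ ~ F a)) /\
     (forall y, Vh z y -> Wh z y) /\ (forall y, Wh z y -> y <> p) /\
     ~ closed_nbhd d eps (Wh z) p)
  (Hopen : forall z, In z Z ->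
     m_open_set d (V z) /\ m_open_set d (W z) /\ m_open_set d (Vh z) /\ m_open_set d (Wh z))
  (Hcover : forall x, exists z, In z Z /\ V z x)
  (HC1 : forall z, In z Z -> diam_lt d (W z) eps)
  (HC2 : forall z, In z Z -> diam_gt d (Wh z) (4 * eps))
  (HC3 : forall z, In z Z -> forall x, closed_nbhd d (2 * eps) (Vh z) x -> Wh z x)
  (HC4 : forall z, In z Z -> forall x,
     W z x <-> (x = z \/ exists a y, L z a /\ Wh z y /\ x = act a y))
  (HC5 : forall z, In z Z ->
     (forall x, V z x <-> (x = z \/ exists a y, L z a /\ Vh z y /\ x = act a y)) /\
     (forall x, m_closure d (V z) x -> W z x))
  (HC6 : forall y z, In y Z -> In z Z ->
     ((forall x, ~ (m_closure d (Vh z) x /\ m_closure d (V y) x)) <->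
      (forall x, ~ (Vh z x /\ V y x)))) :
  forall (g0 : G) (zs : nat -> B) (als : nat -> G),
    edge_path Z Vh V L zs als ->
    exists x, gen_codes mul e d act W g0 zs als x /\
      (forall y, gen_codes mul e d act W g0 zs als y -> y = x) /\
      conical_limit_point d act x /\ ~ in_parabolic_orbit act Pi x.
Proof.
  intros g0 zs als Hpath.
  destruct Hrh as [Hmet [Hcpt [Hact [Hcont [Hconv [_ [Hlen [Hnth [Hbp [_ _]]]]]]]]]].
  assert (Hinf : forall l : list B, exists y, ~ In y l).
  { intro l. apply NNPP. intro Hc. apply Hnonelem. exists l. intros x _.
    apply NNPP. intro. apply Hc. eauto. }
  destruct (coding_main G mul inv e HG B d act Hmet Hcpt Hact Hcont Hconv eps Heps0
              Z V W Vh Wh L HC1 HC2 HC3 HC4 (fun z Hz => proj2 (HC5 z Hz)) zs als Hpath)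
    as [zeta [Hz [Hu Hc]]].
  exists (act g0 zeta). split; [|split; [|split]].
  - exists zeta. split; [exact Hz | reflexivity].
  - intros y [xi [Hxi Hy]]. subst y. f_equal. apply Hu. exact Hxi.
  - apply (conical_transport G mul inv e HG B d act Hmet Hact Hcont). auto.
  - intros [g [p [Hp Hx]]].
    pose proof (conical_transport G mul inv e HG B d act Hmet Hact Hcont _ (inv g)
                  (conical_transport G mul inv e HG B d act Hmet Hact Hcont _ g0 Hc)) as Hcp.
    rewrite Hx in Hcp.
    assert (E : act (inv g) (act g p) = p).
    { rewrite <- (proj2 Hact), (proj1 (proj2 (proj2 (proj2 HG)))), (proj1 Hact). reflexivity. }
    rewrite E in Hcp.
    destruct (In_nth _ _ B0 Hp) as [i [Hi Hip]].
    apply (para_not_conical G mul inv e HG B d act Hmet Hcpt Hact Hcont Hconv Hinf p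
             (proj1 (Hbp p Hp)) S); auto.
    intros h Hh.
    assert (HP : nth i Ps (fun _ => False) h). { apply (Hnth i Hi). rewrite Hip. auto. }
    assert (HIn : In (nth i Ps (fun _ => False)) Ps). { apply nth_In. lia. }
    destruct (HPgen _ HIn h HP) as [w [Hw Hhw]]. exists w. split; auto.
    eapply Forall_impl; [|exact Hw]. intros s [Hs1 Hs2]. split; auto.
    rewrite <- Hip. apply (Hnth i Hi). auto.
Qed.
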